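(* Let $H$ and $G$ be finitely generated groups with $H<G$. Suppose some connected component of $\Gamma_m(H)$ has exponential growth, and let $S\in\Gamma_n(G)$ be a generating $n$-tuple of $G$. Then $\Gamma_{n+m}(G,S)$ has exponential growth. In particular, if $H<G$ and $H$ has exponential Nielsen growth, then $G$ also has exponential Nielsen growth.
   Context: For a group $G$, a generating $n$-tuple is $(g_1,\dots,g_n)\in G^n$ with $G=\langle g_1,\dots,g_n\rangle$. The product replacement graph $\Gamma_n(G)$ has vertices the generating $n$-tuples, with edges from $(g_1,\dots,g_n)$ to each tuple obtained by replacing $g_j$ by $g_jg_i^{\pm1}$ or $g_i^{\pm1}g_j$, for every ordered pair $i\neq j$. For $S=(g_1,\dots,g_n)\in\Gamma_n(G)$ and $m\ge0$, $S^{(m)}=(g_1,\dots,g_n,1,\dots,1)\in\Gamma_{n+m}(G)$ ($m$ trailing identities) and $\Gamma_{n+m}(G,S)$ is the connected component of $\Gamma_{n+m}(G)$ containing $S^{(m)}$. For a graph $\Gamma$ and vertex $v$, $B_\Gamma(v,r)$ is the set of vertices at path distance at most $r$ from $v$; a graph has exponential growth from $v$ if $|B_\Gamma(v,r)|\ge\alpha^r$ for some $\alpha>1$ and all sufficiently large $r$; a connected graph has exponential growth if it has exponential growth from some (equivalently every) vertex. $G$ has exponential Nielsen growth if $\Gamma_n(G,S)$ has exponential growth for some $n$ and some generating $n$-tuple $S$. *)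

(* Defs.v *)
From Stdlib Require Import Reals List Arith.
Import ListNotations.
Open Scope R_scope.

Record Group := {
  carrier :> Type;
  gmul : carrier -> carrier -> carrier;
  gone : carrier;
  ginv : carrier -> carrier;
  gmulA : forall x y z, gmul x (gmul y z) = gmul (gmul x y) z;
  gmul1l : forall x, gmul gone x = x;
  gmul1r : forall x, gmul x gone = x;
  gmulVl : forall x, gmul (ginv x) x = gone;
  gmulVr : forall x, gmul x (ginv x) = gone
}.

Arguments gmul {g}.
Arguments gone {g}.
Arguments ginv {g}.

Section Defs.
Variable G : Group.

Definition is_subgroup (K : G -> Prop) : Prop :=
  K gone /\ (forall x y, K x -> K y -> K (gmul x y)) /\ (forall x, K x -> K (ginv x)).

Inductive in_gen (A : G -> Prop) : G -> Prop :=
  | gen_base x : A x -> in_gen A x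
  | gen_one : in_gen A gone
  | gen_mul x y : in_gen A x -> in_gen A y -> in_gen A (gmul x y)
  | gen_inv x : in_gen A x -> in_gen A (ginv x).

Definition gen_tuple (K : G -> Prop) (n : nat) (l : list G) : Prop :=
  length l = n /\ forall x, K x <-> in_gen (fun y => In y l) x.

Definition fin_gen (K : G -> Prop) : Prop := exists n l, gen_tuple K n l.

Fixpoint set_nth (l : list G) (j : nat) (x : G) : list G :=
  match l, j with
  | [], _ => []
  | _ :: t, O => x :: t
  | h :: t, S j' => h :: set_nth t j' x
  end.

Definition nielsen_move (l l' : list G) : Prop :=
  exists i j, (i <> j)%nat /\ (i < length l)%nat /\ (j < length l)%nat /\
    let gi := nth i l gone in let gj := nth j l gone in
    (l' = set_nth l j (gmul gj gi) \/ l' = set_nth l j (gmul gj (ginv gi)) \/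
     l' = set_nth l j (gmul gi gj) \/ l' = set_nth l j (gmul (ginv gi) gj)).

Definition pr_edge (K : G -> Prop) (n : nat) (u w : list G) : Prop :=
  gen_tuple K n u /\ gen_tuple K n w /\ nielsen_move u w.

Inductive within (K : G -> Prop) (n : nat) (v : list G) : nat -> list G -> Prop :=
  | within0 : gen_tuple K n v -> within K n v 0 v
  | withinS r w : within K n v r w -> within K n v (S r) w
  | within_step r u w : within K n v r u -> pr_edge K n u w -> within K n v (S r) w.

Definition ball (K : G -> Prop) (n : nat) (v : list G) (r : nat) : list G -> Prop :=
  fun w => within K n v r w.

Definition connected (K : G -> Prop) (n : nat) (v w : list G) : Prop :=
  exists r, within K n v r w.

End Defs.

Definition card_ge {T : Type} (A : T -> Prop) (k : nat) : Prop :=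
  exists l : list T, NoDup l /\ length l = k /\ forall x, In x l -> A x.

Definition card_ge_real {T : Type} (A : T -> Prop) (a : R) : Prop :=
  exists k : nat, INR k >= a /\ card_ge A k.

Definition exp_growth_from (G : Group) (K : G -> Prop) (n : nat) (v : list G) : Prop :=
  gen_tuple G K n v /\
  exists alpha : R, alpha > 1 /\ exists r0 : nat,
    forall r : nat, (r >= r0)%nat -> card_ge_real (ball G K n v r) (alpha ^ r).

Definition comp_exp_growth (G : Group) (K : G -> Prop) (n : nat) (v : list G) : Prop :=
  exists w, connected G K n v w /\ exp_growth_from G K n w.

Definition pad (G : Group) (S : list G) (m : nat) : list G := S ++ repeat gone m.

Definition exp_nielsen_growth (G : Group) (K : G -> Prop) : Prop :=
  exists n S, gen_tuple G K n S /\ comp_exp_growth G K n S.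

Definition whole (G : Group) : G -> Prop := fun _ => True.

(* Main.v *)
Require Import Defs.
From Stdlib Require Import Reals List Arith Lia FinFun.
Import ListNotations.

Section Aux.
Variable G : Group.
Local Open Scope nat_scope.

Lemma set_nth_length (l : list G) j x : length (set_nth G l j x) = length l.
Proof. revert j; induction l as [|a l IH]; intros [|j]; simpl; auto. Qed.

Lemma set_nth_app (S u : list G) j x :
  set_nth G (S ++ u) (length S + j) x = S ++ set_nth G u j x.
Proof. induction S as [|a S IH]; simpl; auto. rewrite IH; auto. Qed.

Lemma set_nth_middle (p t : list G) y x : set_nth G (p ++ y :: t) (length p) x = p ++ x :: t.
Proof. induction p as [|a p IH]; simpl; auto. rewrite IH; auto. Qed.

Lemma set_nth_nth (l : list G) j d : set_nth G l j (nth j l d) = l.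
Proof. revert j; induction l as [|a l IH]; intros [|j]; simpl; auto. rewrite IH; auto. Qed.

Lemma set_nth_twice (l : list G) j x y : set_nth G (set_nth G l j x) j y = set_nth G l j y.
Proof. revert j; induction l as [|a l IH]; intros [|j]; simpl; auto. rewrite IH; auto. Qed.

Lemma nth_set_nth (l : list G) j x d : j < length l -> nth j (set_nth G l j x) d = x.
Proof. revert j; induction l as [|a l IH]; intros [|j]; simpl; intros; try lia; auto. apply IH; lia. Qed.

Lemma inv_uniq (x y : G) : gmul x y = gone -> y = ginv x.
Proof.
  intros H. rewrite <- (gmul1l G y), <- (gmulVl G x), <- gmulA, H, gmul1r. reflexivity.
Qed.

Lemma ginv_inv (x : G) : ginv (ginv x) = x.
Proof. symmetry. apply inv_uniq. apply gmulVl. Qed.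

Lemma ginv_one : ginv (gone : G) = gone.
Proof. symmetry; apply inv_uniq; apply gmul1l. Qed.

Lemma ginv_mul (x y : G) : ginv (gmul x y) = gmul (ginv y) (ginv x).
Proof.
  symmetry; apply inv_uniq.
  rewrite gmulA, <- (gmulA _ x y), gmulVr, gmul1r, gmulVr. reflexivity.
Qed.

Lemma in_gen_mono (A B : G -> Prop) x : (forall y, A y -> B y) -> in_gen G A x -> in_gen G B x.
Proof. intros HAB H; induction H; [apply gen_base; auto|apply gen_one|apply gen_mul; auto|apply gen_inv; auto]. Qed.

Lemma gentup_pref n m (S u : list G) :
  gen_tuple G (whole G) n S -> length u = m -> gen_tuple G (whole G) (n + m) (S ++ u).
Proof.
  intros [Hl HS] Hu. split. rewrite length_app; lia.
  intros x; split; intros _; [|exact I].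
  apply (in_gen_mono (fun y => In y S)). intros y Hy; apply in_or_app; auto.
  apply HS; exact I.
Qed.

Lemma nielsen_lift (S u u' : list G) : nielsen_move G u u' -> nielsen_move G (S ++ u) (S ++ u').
Proof.
  intros [i [j [Hij [Hi [Hj Hd]]]]].
  exists (length S + i), (length S + j). rewrite length_app.
  repeat split; try lia. cbv zeta in *.
  rewrite !app_nth2_plus, !set_nth_app.
  destruct Hd as [E|[E|[E|E]]]; subst u'; auto.
Qed.

Lemma within_lift (H : G -> Prop) n m (S w : list G) r w' :
  gen_tuple G (whole G) n S ->
  within G H m w r w' -> within G (whole G) (n + m) (S ++ w) r (S ++ w').
Proof.
  intros HS Hw. induction Hw.
  - apply within0. apply gentup_pref; auto. destruct H0; auto.
  - apply withinS; auto.
  - eapply within_step; eauto. destruct H0 as [Hu [Hw0 Hm]].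
    split; [apply gentup_pref; auto; apply Hu|split; [apply gentup_pref; auto; apply Hw0|]].
    apply nielsen_lift; auto.
Qed.

Section Reach.
Variables (n m : nat) (S : list G).
Hypothesis HS : gen_tuple G (whole G) n S.

Definition reach (T : list G) := exists r, within G (whole G) (n + m) (pad G S m) r T.

Lemma reach_step (u u' : list G) : length u = m -> length u' = m ->
  reach (S ++ u) -> nielsen_move G (S ++ u) (S ++ u') -> reach (S ++ u').
Proof.
  intros Hu Hu' [r Hr] Hm. exists (Datatypes.S r). eapply within_step; eauto.
  split; [apply gentup_pref; auto|split; [apply gentup_pref; auto|auto]].
Qed.

Lemma move_lemma x : in_gen G (fun y => In y S) x ->
  forall u j c, j < length u -> length u = m -> nth j u gone = c -> reach (S ++ u) ->
  reach (S ++ set_nth G u j (gmul c x)) /\ reach (S ++ set_nth G u j (gmul c (ginv x))).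
Proof.
  destruct HS as [HlS _].
  induction 1 as [x Hx| |x y _ IHx _ IHy|x _ IHx]; intros u j c Hj Hu Hc Hr.
  - destruct (In_nth _ _ gone Hx) as [i [Hi Hix]].
    assert (Hmv : forall z, z = x \/ z = ginv x -> reach (S ++ set_nth G u j (gmul c z))).
    { intros z Hz. apply (reach_step u); auto. rewrite set_nth_length; auto.
      exists i, (length S + j). rewrite length_app. repeat split; try lia. cbv zeta.
      rewrite (app_nth1 S u gone Hi), app_nth2_plus, Hix, Hc, !set_nth_app.
      destruct Hz; subst z; [left|right;left]; reflexivity. }
    split; apply Hmv; auto.
  - rewrite ginv_one, gmul1r, <- Hc, set_nth_nth. split; auto.
  - destruct (IHx u j c Hj Hu Hc Hr) as [H1 H2].
    assert (L1 : length (set_nth G u j (gmul c x)) = length u) by apply set_nth_length.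
    assert (L2 : length (set_nth G u j (gmul c (ginv y))) = length u) by apply set_nth_length.
    destruct (IHy (set_nth G u j (gmul c x)) j (gmul c x)) as [H3 _];
      [lia|lia|apply nth_set_nth; lia|exact H1|].
    destruct (IHy u j c Hj Hu Hc Hr) as [_ H4].
    destruct (IHx (set_nth G u j (gmul c (ginv y))) j (gmul c (ginv y))) as [_ H5];
      [lia|lia|apply nth_set_nth; lia|exact H4|].
    rewrite set_nth_twice, <- gmulA in H3, H5. rewrite ginv_mul. split; auto.
  - destruct (IHx u j c Hj Hu Hc Hr) as [H1 H2]. rewrite ginv_inv. split; auto.
Qed.

Lemma fill (q p : list G) : length p + length q = m ->
  reach (S ++ p ++ repeat gone (length q)) -> reach (S ++ p ++ q).
Proof.
  revert p; induction q as [|a q IH]; intros p Hl Hr; simpl in *; auto.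
  replace (p ++ a :: q) with ((p ++ [a]) ++ q) by (rewrite <- app_assoc; auto).
  apply IH. rewrite length_app; simpl; lia.
  rewrite <- app_assoc; simpl.
  destruct (move_lemma a) with (u := p ++ gone :: repeat gone (length q)) (j := length p) (c := @gone G)
    as [H1 _]; auto.
  - apply (proj2 HS a); exact I.
  - rewrite length_app; simpl; lia.
  - rewrite length_app; simpl; rewrite repeat_length; lia.
  - rewrite nth_middle; auto.
  - rewrite gmul1l, set_nth_middle in H1. exact H1.
Qed.

End Reach.

Lemma part1 (H : G -> Prop) m n (v S : list G) :
  gen_tuple G H m v -> comp_exp_growth G H m v ->
  gen_tuple G (whole G) n S -> comp_exp_growth G (whole G) (n + m) (pad G S m).
Proof.
  intros _ [w [_ [Hgw [alpha [Ha [r0 Hr]]]]]] HS.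
  assert (Hlw : length w = m) by apply Hgw.
  exists (S ++ w). split.
  - change (reach n m S (S ++ [] ++ w)).
    apply fill; auto. simpl. rewrite Hlw.
    exists 0. apply within0. unfold pad. apply gentup_pref; auto. apply repeat_length.
  - split. apply gentup_pref; auto.
    exists alpha; split; auto. exists r0. intros r Hr0.
    destruct (Hr r Hr0) as [k [Hk [l [Hnd [Hl Hin]]]]].
    exists k; split; auto. exists (map (fun t => S ++ t) l). repeat split.
    + apply Injective_map_NoDup; auto. intros a b E; eapply app_inv_head; eauto.
    + rewrite length_map; auto.
    + intros x Hx. apply in_map_iff in Hx. destruct Hx as [y [<- Hy]].
      apply (within_lift H); auto. apply Hin; auto.
Qed.

End Aux.

Theorem proposition3p4 (G : Group) (H : G -> Prop) :
  is_subgroup G H -> fin_gen G H -> fin_gen G (whole G) ->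
  (forall (m n : nat) (v S : list G),
      gen_tuple G H m v -> comp_exp_growth G H m v ->
      gen_tuple G (whole G) n S ->
      comp_exp_growth G (whole G) (n + m) (pad G S m)) /\
  (exp_nielsen_growth G H -> exp_nielsen_growth G (whole G)).
Proof.
  intros _ _ [nS [S0 HS0]]. split.
  - intros m n v S. apply part1.
  - intros [m [v [Hv Hc]]]. exists (nS + m)%nat, (pad G S0 m). split.
    + unfold pad. apply gentup_pref; auto. apply repeat_length.
    + eapply part1; eauto.
Qed.
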